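(* Let $A$ be a finite set of alternatives with $|A|\ge 3$, let $N=\{1,\dots,n\}$ with $n\ge 2$, and let $\mathbb{D}$ be a minimally rich and L-tops-only domain of linear orders over $A$. If $\mathbb{D}$ is connected with two distinct neighbours, then every unanimous and locally strategy-proof social choice function $f:\mathbb{D}^n\to A$ satisfies dictatorship.
   Context: A domain is a set $\mathbb{D}$ of linear orders (strict preferences) over $A$; a preference profile is $P=(P_1,\dots,P_n)\in\mathbb{D}^n$. For a linear order $P_i$, $r_k(P_i)$ is its $k$-th ranked alternative. $\mathbb{D}$ is minimally rich if every $a\in A$ is ranked first in some $P_i\in\mathbb{D}$. Two linear orders $P_i,P_i'$ are adjacent ($P_i\sim P_i'$) if $P_i'$ is obtained from $P_i$ by swapping two consecutively ranked alternatives and leaving all other ranks unchanged. A social choice function (scf) is a map $f:\mathbb{D}^n\to A$. It is unanimous if $f(P)=a$ whenever every voter ranks $a$ first. It is locally strategy-proof if there is no voter $i$, profile $P$, and $P_i'\in\mathbb{D}$ with $P_i'\sim P_i$ such that $f(P_i',P_{-i})\,P_i\,f(P_i,P_{-i})$. It satisfies dictatorship if there is a voter $i$ with $f(P)=r_1(P_i)$ for all $P\in\mathbb{D}^n$. It satisfies tops-onlyness if $f(P)=f(P')$ whenever $r_1(P_i)=r_1(P_i')$ for all $i$. $\mathbb{D}$ is L-tops-only if every unanimous and locally strategy-proof scf $f:\mathbb{D}^n\to A$ satisfies tops-onlyness. A path in $\mathbb{D}$ is a sequence of distinct preferences in $\mathbb{D}$ in which consecutive ones are adjacent; $\mathbb{D}$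 is connected if any two of its preferences are joined by a path in $\mathbb{D}$. For $\bar{\mathbb{D}}\subseteq\mathbb{D}$, a neighbour of $\bar{\mathbb{D}}$ in $\mathbb{D}$ is a $P_i\in\mathbb{D}\setminus\bar{\mathbb{D}}$ adjacent to some element of $\bar{\mathbb{D}}$. Two preferences $P_i,P_i'\in\mathbb{D}$ are top-connected in $\mathbb{D}$ if there is a path from $P_i$ to $P_i'$ in $\mathbb{D}$ all of whose members have the same top-ranked alternative. The top-connected closure $\mathbb{D}^{TCC}(P_i)$ is the set of preferences in $\mathbb{D}$ top-connected to $P_i$, together with $P_i$. $\mathbb{D}$ is connected with two distinct neighbours if (1) $\mathbb{D}$ is connected, and (2) for every $P_i\in\mathbb{D}$ there exist two neighbours $P_i',P_i''$ of $\mathbb{D}^{TCC}(P_i)$ in $\mathbb{D}$ with $r_1(P_i')\ne r_1(P_i'')$. *)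

(* Defs.v *)
From mathcomp Require Import all_boot all_fingroup.
Set Implicit Arguments. Unset Strict Implicit. Unset Printing Implicit Defensive.

Section Prefs.
Variable A : finType.

(* A preference is a #|A|-tuple listing the alternatives from rank 1 to rank #|A|;
   it is a linear order over A exactly when it is duplicate-free. *)
Definition pref := (#|A|).-tuple A.
Definition is_linorder (p : pref) : bool := uniq p.

(* r_1(p): the top-ranked alternative (None only for the degenerate empty A). *)
Definition top (p : pref) : option A := ohead p.

Definition prefers (p : pref) (a b : A) : bool := index a p < index b p.

Definition adjacent (p q : pref) : bool :=
  [exists k : 'I_#|A|, exists k' : 'I_#|A|,
     (val k' == (val k).+1) && [forall j, tnth q j == tnth p (tperm k k' j)]].

Definition minimally_rich (D : {set pref}) : Prop :=
  forall a : A, exists2 p, p \in D & top p = Some a.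

Definition path_in (D : {set pref}) (p : pref) (s : seq pref) (q : pref) : Prop :=
  [/\ uniq (p :: s), all (fun x => x \in D) (p :: s), path adjacent p s & last p s = q].

Definition connected_dom (D : {set pref}) : Prop :=
  forall p q, p \in D -> q \in D -> exists s, path_in D p s q.

Definition top_connected (D : {set pref}) (p q : pref) : Prop :=
  exists s, path_in D p s q /\ all (fun x => top x == top p) (p :: s).

Definition in_TCC (D : {set pref}) (p q : pref) : Prop :=
  q = p \/ top_connected D p q.

Definition neighbour (D : {set pref}) (S : pref -> Prop) (q : pref) : Prop :=
  [/\ q \in D, ~ S q & exists2 s, S s & adjacent s q].

Definition connected_two_neighbours (D : {set pref}) : Prop :=
  connected_dom D /\
  forall p, p \in D -> exists q q',
    [/\ neighbour D (in_TCC D p) q, neighbour D (in_TCC D p) q' & top q <> top q'].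

Variable n : nat.
Definition profile := {ffun 'I_n -> pref}.
Definition scf := profile -> A.

Definition in_dom (D : {set pref}) (P : profile) : Prop := forall i, P i \in D.

Definition upd (P : profile) (i : 'I_n) (p : pref) : profile :=
  [ffun j => if j == i then p else P j].

Definition unanimous (D : {set pref}) (f : scf) : Prop :=
  forall P a, in_dom D P -> (forall i, top (P i) = Some a) -> f P = a.

Definition locally_sp (D : {set pref}) (f : scf) : Prop :=
  forall P i p', in_dom D P -> p' \in D -> adjacent (P i) p' ->
    ~~ prefers (P i) (f (upd P i p')) (f P).

Definition dictatorship (D : {set pref}) (f : scf) : Prop :=
  exists i : 'I_n, forall P, in_dom D P -> Some (f P) = top (P i).

Definition tops_only (D : {set pref}) (f : scf) : Prop :=
  forall P P', in_dom D P -> in_dom D P' ->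
    (forall i, top (P i) = top (P' i)) -> f P = f P'.

Definition L_tops_only (D : {set pref}) : Prop :=
  forall f : scf, unanimous D f -> locally_sp D f -> tops_only D f.

End Prefs.

(* Main.v *)
Require Import Defs.
From mathcomp Require Import all_boot all_fingroup.
From mathcomp Require Import zify.
From Stdlib Require Import FunctionalExtensionality.
Set Implicit Arguments. Unset Strict Implicit. Unset Printing Implicit Defensive.


Lemma connect_closed (T : finType) (e : rel T) (Q : T -> Prop) :
  (forall x y, e x y -> Q x -> Q y) -> forall x y, connect e x y -> Q x -> Q y.
Proof.
move=> HQ x y /connectP [p Hp ->]; elim: p x Hp => //= z p IH x /andP [Hxz Hp] Qx.
exact: IH Hp (HQ _ _ Hxz Qx).
Qed.

Section Graph.
Variable A : finType.
Variable E : rel A.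
Hypothesis Esym : symmetric E.
Hypothesis Eirr : irreflexive E.
Hypothesis Econn : forall x y, connect E x y.
Hypothesis Edeg : forall x, exists y z, [/\ E x y, E x z & y != z].

Definition Eprop (h : A -> A) :=
  forall u v, E u v -> h u = h v \/ (h u = u /\ h v = v).

Lemma walk (h : A -> A) : Eprop h -> forall p s, path E s p ->
  h (last s p) != h s -> h s \in belast s p /\ h (h s) = h s.
Proof.
move=> Hh; elim=> [|x p IH] s /=; first by rewrite eqxx.
move=> /andP [Hsx Hp] Hne.
case: (Hh _ _ Hsx) => [Heq|[Hs Hx]].
  rewrite Heq in Hne *; have [H1 H2] := IH _ Hp Hne.
  by rewrite inE H1 orbT.
by rewrite Hs inE eqxx.
Qed.

Lemma diag (phi : A -> A -> A) c :
  (forall y, Eprop (phi^~ y)) -> (forall x, Eprop (phi x)) ->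
  (forall x, phi x x = c) -> forall x y, phi x y = c.
Proof.
move=> H1 H2 Hd x y; apply/eqP; apply/negPn/negP => Hne.
set v := phi x y in Hne.
have /connectP [p Hp Hl] := Econn x y.
have Hne' : (phi^~ y) (last x p) != (phi^~ y) x.
  by rewrite /= -Hl Hd eq_sym.
have [_ Hv] := walk (H1 y) Hp Hne'.
rewrite /= -/v in Hv.
have /connectP [q Hq Hlq] := Econn y v.
case: (shortenP Hq) Hlq => q' Hq' Hu _ Hlq.
have Hne2 : (phi v) (last y q') != (phi v) y.
  by rewrite -Hlq Hd Hv eq_sym.
have [Hm _] := walk (H2 v) Hq' Hne2.
move: Hu; rewrite lastI rcons_uniq => /andP [].
by rewrite -Hlq -{1}Hv Hm.
Qed.

Section Two.
Variable phi : A -> A -> A.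
Hypothesis Hu : forall x, phi x x = x.
Hypothesis H1 : forall y, Eprop (phi^~ y).
Hypothesis H2 : forall x, Eprop (phi x).

Definition domb u w := (phi w u == u) && (phi u w == u).
Definition eav (u : A) := fun x y => [&& E x y, x != u & y != u].
Definition K u v := [set w | connect (eav u) v w].

Lemma edge12 a b : E a b -> phi a b = a \/ phi a b = b.
Proof. move=> Hab; case: (H1 b Hab) => /= [->|[-> _]]; rewrite ?Hu; tauto. Qed.

Lemma spread1 u v w : domb u v -> v != u -> E v w -> domb u w.
Proof.
move=> /andP [/eqP Hvu /eqP Huv] Hne Hvw; apply/andP; split.
  case: (H1 u Hvw) => /= [<-|[Hv _]]; first by rewrite Hvu.
  by rewrite Hvu in Hv; rewrite Hv eqxx in Hne.
case: (H2 u Hvw) => /= [<-|[Hv _]]; first by rewrite Huv.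
by rewrite Huv in Hv; rewrite Hv eqxx in Hne.
Qed.

Lemma spread_path u p v : path (eav u) v p -> domb u v -> v != u ->
  all (domb u) p /\ all (fun w => w != u) p.
Proof.
elim: p v => //= x p IH v /andP [/and3P [Hvx _ Hxu] Hp] Hd Hne.
have Hdx := spread1 Hd Hne Hvx.
have [H3 H4] := IH _ Hp Hdx Hxu.
by rewrite Hdx H3 Hxu H4.
Qed.

Lemma path_avoid u p v : path (eav u) v p -> all (fun w => w != u) p.
Proof.
elim: p v => //= x p IH v /andP [/and3P [_ _ Hxu] Hp]; by rewrite Hxu (IH _ Hp).
Qed.

Lemma path_change u u' p v : path (eav u) v p -> v != u' ->
  all (fun w => w != u') p -> path (eav u') v p.
Proof.
elim: p v => //= x p IH v /andP [/and3P [Hvx _ _] Hp] Hv /andP [Hx Hall].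
by rewrite /eav Hvx Hv Hx /= (IH _ Hp Hx Hall).
Qed.

Lemma noDom_aux m : forall a b, #|K a b| <= m -> E a b -> ~~ domb a b.
Proof.
elim: m => [|m IH] a b.
  by rewrite leqn0 => /eqP /cards0_eq /setP /(_ b); rewrite !inE connect0.
move=> Hm Hab; apply/negP => Hdab.
have Hba : b != a by apply/negP => /eqP Hba; rewrite Hba Eirr in Hab.
have [c Hbc Hca] : exists2 c, E b c & c != a.
  have [y [z [Hy Hz Hyz]]] := Edeg b.
  case: (eqVneq y a) => [Hya|Hya]; last by exists y.
  by exists z => //; rewrite -Hya eq_sym.
have Hcb : c != b by apply/negP => /eqP Hcb; rewrite Hcb Eirr in Hbc.
have Hdac := spread1 Hdab Hba Hbc.
move: (Hdac) => /andP [/eqP Hca' /eqP Hac'].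
have Hdbc : domb b c.
  apply/andP; split; apply/eqP.
    have Hcb' : E c b by rewrite Esym.
    case: (edge12 Hcb') => // Hc.
    have Hba' : E b a by rewrite Esym.
    case: (H2 c Hba') => /= [Hx|[Hx _]]; first by rewrite Hc Hca' in Hx; rewrite Hx eqxx in Hca.
    by rewrite Hc in Hx; rewrite Hx eqxx in Hcb.
  case: (edge12 Hbc) => // Hc.
  have Hba' : E b a by rewrite Esym.
  case: (H1 c Hba') => /= [Hx|[Hx _]]; first by rewrite Hc Hac' in Hx; rewrite Hx eqxx in Hca.
  by rewrite Hc in Hx; rewrite Hx eqxx in Hcb.
have Hnab : ~~ domb b a.
  apply/negP => /andP [/eqP Hx _]; move: Hdab => /andP [_ /eqP Hy].
  by rewrite Hx in Hy; rewrite Hy eqxx in Hba.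
have Hsub : K b c \proper K a b.
  apply/properP; split.
    apply/subsetP => w; rewrite !inE => /connectP [p Hp ->].
    have [Hd1 _] := spread_path Hp Hdbc Hcb.
    have Hall : all (fun w => w != a) p.
      apply/allP => x Hx; apply/negP => /eqP Hxa.
      by move/allP: Hd1 => /(_ x Hx); rewrite Hxa (negbTE Hnab).
    apply/connectP; exists (c :: p) => //=.
      by rewrite /eav Hbc Hba Hca /= (path_change Hp Hca Hall).
  exists b; first by rewrite inE connect0.
  rewrite inE; apply/negP => /connectP [p Hp Hl].
  have Hav := path_avoid Hp.
  case: p Hp Hl Hav => [|x p] /= _; first by move=> Hl; rewrite Hl eqxx in Hcb.
  move=> Hl /andP [Hx Hall]; case/lastP: p Hall Hl => [|p y] /=; first by move=> _ Hl; rewrite -Hl eqxx in Hx.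
  by rewrite last_rcons all_rcons => /andP [Hy _] Hl; rewrite -Hl eqxx in Hy.
have Hlt : #|K b c| <= m by have := proper_card Hsub; move: Hm; lia.
by have := IH b c Hlt Hbc; rewrite Hdbc.
Qed.

Lemma noDom a b : E a b -> ~~ domb a b.
Proof. exact: (@noDom_aux #|K a b|). Qed.

Lemma flip a b : E a b -> phi a b = a -> phi b a = b.
Proof.
move=> Hab Ha; have Hba : E b a by rewrite Esym.
case: (edge12 Hba) => // Hb.
by have := noDom Hab; rewrite /domb Hb Ha !eqxx.
Qed.

Lemma adjw a b c : E a b -> E b c -> a != c -> phi a b = a -> phi b c = b.
Proof.
move=> Hab Hbc Hac Ha; case: (edge12 Hbc) => // Hc.
have Hcb : c != b by apply/negP => /eqP Hcb; rewrite Hcb Eirr in Hbc.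
have Hba : E b a by rewrite Esym.
have Hb : b != a by apply/negP => /eqP Hb; rewrite Hb Eirr in Hab.
case: (H1 c Hba) => /= [Hx|[Hx _]]; last by rewrite Hc in Hx; rewrite Hx eqxx in Hcb.
case: (H2 a Hbc) => /= [Hy|[Hy _]]; last by rewrite Ha in Hy; rewrite Hy eqxx in Hb.
by move: Hac; rewrite -{1}Ha Hy -Hx Hc eqxx.
Qed.

Definition Vp v := forall w, E v w -> phi v w = v /\ phi w v = w.

Lemma Vspread v w : E v w -> Vp v -> Vp w.
Proof.
move=> Hvw HV z Hwz; case: (eqVneq z v) => [->|Hzv].
  by have [? ?] := HV w Hvw.
have Hwv : E w v by rewrite Esym.
have [Hv _] := HV w Hvw.
have Hvz : v != z by rewrite eq_sym.
have Hw := adjw Hvw Hwz Hvz Hv.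
by split => //; apply: flip.
Qed.

Lemma main1 a b : E a b -> phi a b = a -> forall x y, phi x y = x.
Proof.
move=> Hab Ha.
have HVb : Vp b.
  move=> z Hbz; case: (eqVneq z a) => [->|Hza]; first by split => //; apply: flip.
  have Haz : a != z by rewrite eq_sym.
  have Hw := adjw Hab Hbz Haz Ha.
  by split => //; apply: flip.
have HV : forall v, Vp v by move=> v; apply: (connect_closed Vspread (Econn b v)).
move=> x y.
apply: (@connect_closed _ E (fun w => phi x w = x) _ x y (Econn x y) (Hu x)).
move=> w w' Hww' Hw; case: (eqVneq w x) => [Hwx|Hwx].
  by rewrite Hwx in Hww'; have [] := HV x w' Hww'.
case: (H2 x Hww') => /= [<-|[Hx _]] //.
by rewrite Hw in Hx; rewrite Hx eqxx in Hwx.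
Qed.
End Two.

Lemma two_voter (a0 : A) (phi : A -> A -> A) :
  (forall x, phi x x = x) -> (forall y, Eprop (phi^~ y)) -> (forall x, Eprop (phi x)) ->
  (forall x y, phi x y = x) \/ (forall x y, phi x y = y).
Proof.
move=> Hu H1 H2.
have [b0 [_ [Hab _ _]]] := Edeg a0.
case: (edge12 Hu H1 Hab) => Hc; first by left; apply: (main1 Hu H1 H2 Hab Hc).
right => x y.
have Hba : E b0 a0 by rewrite Esym.
have := @main1 (fun x y => phi y x) Hu H2 H1 b0 a0 Hba Hc y x.
by [].
Qed.

Definition updf (I : finType) (t : I -> A) (i : I) (a : A) : I -> A :=
  fun j => if j == i then a else t j.

Definition EG (I : finType) (g : (I -> A) -> A) :=
  forall t i, Eprop (fun a => g (updf t i a)).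

Lemma Rtrans (a b x y z : A) : (x = y \/ (x = a /\ y = b)) -> (y = z \/ (y = a /\ z = b)) ->
  (x = z \/ (x = a /\ z = b)).
Proof. by move=> [->|[-> ->]] //; move=> [<-|[-> ->]]; right. Qed.

Lemma comp_move (I : finType) (g : (I -> A) -> A) : EG g -> forall l, uniq l ->
  forall t, Eprop (fun a => g (fun j => if j \in l then a else t j)).
Proof.
move=> HE; elim=> [|x l IH] /=; first by move=> _ t u v _; left.
move=> /andP [Hx Hl] t u v Huv.
have E1 := HE (fun j => if j \in l then u else t j) x u v Huv.
have E2 := IH Hl (updf t x v) u v Huv.
rewrite /= in E1 E2.
have e1 : updf (fun j => if j \in l then u else t j) x u =
          (fun j => if j \in x :: l then u else t j).
  by apply: functional_extensionality => j; rewrite /updf inE; case: (j == x).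
have e2 : updf (fun j => if j \in l then u else t j) x v =
          (fun j => if j \in l then u else updf t x v j).
  apply: functional_extensionality => j; rewrite /updf; case: eqP => // ->.
  by rewrite (negbTE Hx).
have e3 : (fun j => if j \in l then v else updf t x v j) =
          (fun j => if j \in x :: l then v else t j).
  by apply: functional_extensionality => j; rewrite /updf inE; case: (j == x) => //; case: (j \in l).
rewrite e1 e2 in E1; rewrite e3 in E2.
exact: Rtrans E1 E2.
Qed.

Lemma nvoter (a0 : A) m : forall (I : finType), #|I| = m.+1 ->
  forall g : (I -> A) -> A, (forall a, g (fun _ => a) = a) -> EG g ->
  exists i, forall t, g t = t i.
Proof.
elim: m => [|m IH] I HI g Hu HE.
  have [i Hi] := fintype1 HI; exists i => t.
  have -> : t = (fun _ => t i) by apply: functional_extensionality => j; rewrite (Hi j).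
  by rewrite Hu.
have /card_gt1P [i0 [j0 [_ _ Hij]]] : 1 < #|I| by rewrite HI.
pose I' : finType := {k : I | k != j0}.
have HI' : #|I'| = m.+1 by rewrite card_sig cardC1 HI.
pose i0' : I' := exist _ i0 Hij.
pose pi := fun j : I => insubd i0' j.
have valpi : forall j, val (pi j) = if j == j0 then i0 else j.
  move=> j; case: (eqVneq j j0) => [->|H].
    by rewrite /pi /insubd insubN ?eqxx.
  by rewrite /pi insubdK.
pose g' := fun s : I' -> A => g (fun j => s (pi j)).
have Hu' : forall a, g' (fun _ => a) = a by move=> a; rewrite /g' Hu.
have HE' : EG g'.
  move=> s k u v Huv.
  have := comp_move HE (enum_uniq (fun j => pi j == k)) (fun j => s (pi j)) Huv.
  have e : forall w, (fun j => if j \in enum (fun j => pi j == k) then w else s (pi j)) =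
                      (fun j => updf s k w (pi j)).
    by move=> w; apply: functional_extensionality => j; rewrite mem_enum /updf.
  by rewrite /= !e.
have [k Hk] := IH I' HI' g' Hu' HE'.
pose phi := fun t x y => g (updf (updf t i0 x) j0 y).
have Hji : j0 != i0 by rewrite eq_sym.
have comm : forall t x y, updf (updf t i0 x) j0 y = updf (updf t j0 y) i0 x.
  move=> t x y; apply: functional_extensionality => j; rewrite /updf.
  case: (eqVneq j j0) => [->|//]; by rewrite (negbTE Hji).
have H1 : forall t y, Eprop (phi t ^~ y).
  by move=> t y u v Huv; rewrite /phi !comm; apply: HE.
have H2 : forall t x, Eprop (phi t x).
  by move=> t x; apply: HE.
have Hdiag : forall t x, phi t x x = updf t i0 x (val k).
  move=> t x; rewrite /phi.
  have -> : updf (updf t i0 x) j0 x = (fun j => (fun k' : I' => updf t i0 x (val k')) (pi j)).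
    apply: functional_extensionality => j; rewrite /= valpi /updf.
    by case: (eqVneq j j0) => // _; rewrite eqxx.
  exact: (Hk (fun k' : I' => updf t i0 x (val k'))).
have Hphit : forall t, phi t (t i0) (t j0) = g t.
  move=> t; rewrite /phi; congr g; apply: functional_extensionality => j; rewrite /updf.
  by case: (eqVneq j j0) => [->//|]; case: (eqVneq j i0) => [->//|].
case: (eqVneq (val k) i0) => Hki; last first.
  exists (val k) => t.
  have := @diag (phi t) (t (val k)) (H1 t) (H2 t).
  rewrite -Hphit => -> // x; by rewrite Hdiag /updf (negbTE Hki).
have Hd1 : forall t x, phi t x x = x by move=> t x; rewrite Hdiag Hki /updf eqxx.
pose P1 := fun t => forall x y, phi t x y = x.
have Hor : forall t, P1 t \/ (forall x y, phi t x y = y).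
  by move=> t; apply: (two_voter a0 (Hd1 t) (H1 t) (H2 t)).
have step : forall t mm a b, E a b -> P1 (updf t mm a) -> P1 (updf t mm b).
  move=> t mm a b Hab Ha; rewrite /P1 in Ha *.
  case: (eqVneq mm i0) => [Hm|Hm].
    suff -> : phi (updf t mm b) = phi (updf t mm a) by [].
    apply: functional_extensionality => x; apply: functional_extensionality => y.
    rewrite /phi; congr g; apply: functional_extensionality => j; rewrite /updf Hm.
    by case: (j == j0); case: (j == i0).
  case: (eqVneq mm j0) => [Hm'|Hm'].
    suff -> : phi (updf t mm b) = phi (updf t mm a) by [].
    apply: functional_extensionality => x; apply: functional_extensionality => y.
    rewrite /phi; congr g; apply: functional_extensionality => j; rewrite /updf Hm'.
    by case: (j == j0); case: (j == i0).
  case: (Hor (updf t mm b)) => // Hb.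
  have := HE (updf (updf t i0 b) j0 a) mm a b Hab.
  have e : forall w, updf (updf (updf t i0 b) j0 a) mm w = updf (updf (updf t mm w) i0 b) j0 a.
    move=> w; apply: functional_extensionality => j; rewrite /updf.
    case: (eqVneq j mm) => [->|//]; by rewrite (negbTE Hm) (negbTE Hm').
  rewrite /= !e.
  have := Ha b a; have := Hb b a; rewrite /phi => -> ->.
  have Hba : b != a by apply/negP => /eqP Hba; rewrite Hba Eirr in Hab.
  by case=> [Hx|[Hx _]]; rewrite Hx eqxx in Hba.
have coord : forall t mm c, P1 t -> P1 (updf t mm c).
  move=> t mm c Ht.
  have e0 : updf t mm (t mm) = t.
    by apply: functional_extensionality => j; rewrite /updf; case: eqP => [->|].
  apply: (@connect_closed _ E (fun w => P1 (updf t mm w)) _ (t mm) c (Econn _ _)).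
    by move=> x y Hxy; apply: step.
  by rewrite e0.
have allc : forall t t', P1 t -> P1 t'.
  move=> t t' Ht.
  suff : forall l : seq I, P1 (fun j => if j \in l then t' j else t j).
    move/(_ (enum I)).
    suff -> : (fun j => if j \in enum I then t' j else t j) = t' by [].
    by apply: functional_extensionality => j; rewrite mem_enum.
  elim=> [|x l IHl] //=.
  have -> : (fun j => if j \in x :: l then t' j else t j) =
            updf (fun j => if j \in l then t' j else t j) x (t' x).
    apply: functional_extensionality => j; rewrite /updf inE.
    by case: (eqVneq j x) => [->|].
  exact: coord.
case: (Hor (fun _ => a0)) => H0.
  by exists i0 => t; rewrite -Hphit (allc _ t H0).
exists j0 => t; rewrite -Hphit.
case: (Hor t) => Ht; last exact: Ht.
have H0' := allc _ (fun _ => a0) Ht.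
have [b [_ [Hab _ _]]] := Edeg a0.
have := H0' a0 b; rewrite H0 => Hba.
by rewrite Hba Eirr in Hab.
Qed.
End Graph.


Section Bridge.
Variable A : finType.
Hypothesis N0 : 0 < #|A|.
Definition i0A : 'I_#|A| := Ordinal N0.
Definition tp (p : pref A) : A := tnth p i0A.

Lemma top_tp (p : pref A) : top p = Some (tp p).
Proof.
rewrite /top /tp; case: p => [[|x s] Hs] /=.
  by exfalso; move: (N0) (Hs) => H /eqP H'; rewrite -H' in H.
by rewrite (tnth_nth x).
Qed.

Lemma all_in (p : pref A) : uniq p -> forall x, x \in p.
Proof.
move=> Hu x.
have Hc : #|mem p| = #|(predT : {pred A})|.
  by rewrite (card_uniqP Hu) size_tuple.
have := subset_cardP Hc; rewrite subset_predT => /(_ isT) /(_ x).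
by rewrite !inE.
Qed.

Lemma adj_sym (p q : pref A) : adjacent p q -> adjacent q p.
Proof.
move=> /existsP [k /existsP [k' /andP [Hk /forallP Hq]]].
apply/existsP; exists k; apply/existsP; exists k'; rewrite Hk /=.
apply/forallP => j; move/eqP: (Hq (tperm k k' j)); rewrite tpermK => ->.
by [].
Qed.

Lemma tperm_val (k k' j : 'I_#|A|) :
  val (tperm k k' j) = if j == k then val k' else if j == k' then val k else val j.
Proof.
case: (eqVneq j k) => [->|Hk]; first by rewrite tpermL.
case: (eqVneq j k') => [->|Hk']; first by rewrite tpermR.
by rewrite tpermD // eq_sym.
Qed.

Lemma idx (p : pref A) (j : 'I_#|A|) : uniq p -> index (tnth p j) p = j.
Proof. by move=> Hu; rewrite (tnth_nth (tnth p j)) index_uniq // size_tuple. Qed.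

Lemma as_tnth (p : pref A) x : uniq p -> exists j : 'I_#|A|, x = tnth p j.
Proof.
move=> Hu; have Hx := all_in Hu x.
have Hi : index x p < #|A| by rewrite -{2}(size_tuple p) index_mem.
by exists (Ordinal Hi); rewrite (tnth_nth x) /= nth_index.
Qed.

Lemma swap_nat (a b : nat) : a <= b -> a != b ->
  (if b == 0 then 1 else if b == 1 then 0 else b) <= (if a == 0 then 1 else if a == 1 then 0 else a) ->
  a = 0 /\ b = 1.
Proof. by case: a b => [|[|a]] [|[|b]] //=; lia. Qed.

Lemma key (p q : pref A) x y : uniq p -> uniq q -> adjacent p q -> tp p != tp q ->
  ~~ prefers p y x -> ~~ prefers q x y -> x = y \/ (x = tp p /\ y = tp q).
Proof.
move=> Hp Hq /existsP [k /existsP [k' /andP [/eqP Hk /forallP Hqp]]] Hne.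
have Hqj : forall j, tnth q j = tnth p (tperm k k' j) by move=> j; apply/eqP.
have [jx ->] := as_tnth x Hp; have [jy ->] := as_tnth y Hp.
have Hqx : forall j, tnth p j = tnth q (tperm k k' j) by move=> j; rewrite Hqj tpermK.
have Ix : forall j, index (tnth p j) q = tperm k k' j by move=> j; rewrite Hqx idx.
rewrite /prefers !idx // !Ix -!leqNgt !tperm_val.
have Hk0 : val k = 0.
  move: Hne; rewrite /tp Hqj.
  case: (eqVneq i0A k) => [Hk1|H1]; first by rewrite -Hk1.
  case: (eqVneq i0A k') => [H2|H2]; first by move: Hk; rewrite -H2 /=.
  have e : tperm k k' i0A = i0A by rewrite tpermD // eq_sym.
  by rewrite e eqxx.
case: (eqVneq jx jy) => [->|Hxy]; first by left.
have Hxy' : val jx != val jy by [].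
rewrite -!val_eqE Hk Hk0 => H H0; right.
have Hxy2 : \val jx != \val jy by [].
have [Ex Ey] := swap_nat H Hxy2 H0.
rewrite /tp Hqj; split; congr tnth; apply: val_inj; first by rewrite /= Ex.
by rewrite tperm_val -!val_eqE Hk Hk0 /= Ey.
Qed.

Section Dom.
Variable D : {set pref A}.

Definition Eg : rel A := fun a b => (a != b) &&
  [exists p : pref A, exists q : pref A, [&& p \in D, q \in D, adjacent p q, tp p == a & tp q == b]].

Lemma Eg_sym1 a b : Eg a b -> Eg b a.
Proof.
move=> /andP [Hab /existsP [p /existsP [q /and5P [Hp Hq Hpq Ha Hb]]]].
rewrite /Eg eq_sym Hab /=; apply/existsP; exists q; apply/existsP; exists p.
by rewrite Hp Hq (adj_sym Hpq) Ha Hb.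
Qed.

Lemma Eg_sym : symmetric Eg.
Proof. by move=> a b; apply/idP/idP; apply: Eg_sym1. Qed.

Lemma Eg_irr : irreflexive Eg.
Proof. by move=> a; rewrite /Eg eqxx. Qed.

Lemma path_conn (p : pref A) (s : seq (pref A)) : path (@adjacent A) p s -> all (fun x => x \in D) (p :: s) ->
  connect Eg (tp p) (tp (last p s)).
Proof.
elim: s p => [|x s IH] p /=; first by rewrite connect0.
move=> /andP [Hpx Hp] /andP [HpD /andP [HxD Hall]].
have IH' := IH x Hp; rewrite /= HxD Hall in IH'.
apply: connect_trans (IH' isT).
case: (eqVneq (tp p) (tp x)) => [->|Hne]; first by rewrite connect0.
apply: connect1; rewrite /Eg Hne; apply/existsP; exists p; apply/existsP; exists x.
by rewrite HpD HxD Hpx !eqxx.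
Qed.

Lemma tp_of p a : top p = Some a -> tp p = a.
Proof. by rewrite top_tp => -[]. Qed.

Lemma Econn_of : minimally_rich D -> connected_dom D -> forall a b, connect Eg a b.
Proof.
move=> Hmr Hc a b.
have [pa HpaD Ha] := Hmr a; have [pb HpbD Hb] := Hmr b.
have [s [_ Hall Hp Hl]] := Hc pa pb HpaD HpbD.
by have := path_conn Hp Hall; rewrite Hl (tp_of Ha) (tp_of Hb).
Qed.

Lemma tc_of_path (p : pref A) (s : seq (pref A)) : path (@adjacent A) p s -> all (fun x => x \in D) (p :: s) ->
  all (fun x => top x == top p) (p :: s) -> top_connected D p (last p s).
Proof.
move=> Hp HD Ht; case: (shortenP Hp) => p' Hp' Hu Hsub.
exists p'; split; first split => //.
  move: HD => /= /andP [-> /allP HD] /=; apply/allP => x Hx; exact: HD _ (Hsub _ Hx).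
move: Ht => /= /andP [-> /allP Ht] /=; apply/allP => x Hx; exact: Ht _ (Hsub _ Hx).
Qed.

Lemma nb_edge (p q : pref A) : p \in D -> neighbour D (in_TCC D p) q -> Eg (tp p) (tp q).
Proof.
move=> HpD [HqD HnT [s HsT Hsq]].
have [sp [Hp HD Ht Hl]] : exists sp, [/\ path (@adjacent A) p sp, all (fun x => x \in D) (p :: sp),
    all (fun x => top x == top p) (p :: sp) & last p sp = s].
  case: HsT => [->|[sp [[_ HD Hp Hl] Ht]]]; last by exists sp.
  by exists [::]; rewrite /= HpD eqxx.
have HsD : s \in D by move/allP: HD; apply; rewrite -Hl mem_last.
have Hts : top s = top p by apply/eqP; move/allP: Ht; apply; rewrite -Hl mem_last.
have Hne : top q != top p.
  apply/negP => /eqP Htq; apply: HnT; right.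
  have := @tc_of_path p (rcons sp q); rewrite last_rcons; apply.
  - by rewrite rcons_path Hp Hl Hsq.
  - by rewrite -rcons_cons all_rcons HqD.
  - by rewrite -rcons_cons all_rcons Htq eqxx.
rewrite /Eg; apply/andP; split.
  by move: Hne; rewrite !top_tp eq_sym; apply: contra => /eqP ->.
apply/existsP; exists s; apply/existsP; exists q.
have Hts' : tp s = tp p by move: Hts; rewrite !top_tp => -[].
by rewrite HsD HqD Hsq Hts' !eqxx.
Qed.

Lemma Edeg_of : minimally_rich D -> connected_two_neighbours D ->
  forall a, exists y z, [/\ Eg a y, Eg a z & y != z].
Proof.
move=> Hmr [_ H2] a.
have [p HpD Ha] := Hmr a.
have [q [q' [Nq Nq' Hqq']]] := H2 p HpD.
exists (tp q), (tp q'); rewrite -(tp_of Ha); split; try exact: nb_edge.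
by apply/negP => /eqP Heq; apply: Hqq'; rewrite !top_tp Heq.
Qed.
End Dom.
End Bridge.

Theorem theorem2 (A : finType) (n : nat) (D : {set pref A}) :
  3 <= #|A| -> 2 <= n ->
  (forall p, p \in D -> is_linorder p) ->
  minimally_rich D -> L_tops_only n D ->
  connected_two_neighbours D ->
  forall f : scf A n, unanimous D f -> locally_sp D f -> dictatorship D f.
Proof.
move=> HA Hn Hlin Hmr HL H2n f Hun Hlsp.
have N0 : 0 < #|A| by apply: leq_trans HA.
have Htops := HL f Hun Hlsp.
have [a0 _] : exists a : A, True by have /card_gt0P [a _] := N0; exists a.
have [p0 Hp0D _] := Hmr a0.
pose sel := fun a : A => odflt p0 [pick p in D | top p == Some a].
have Hsel : forall a, sel a \in D /\ top (sel a) = Some a.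
  move=> a; rewrite /sel; case: pickP => [p /andP [HpD /eqP Ht]|Hnone] //=.
  by have [p HpD Ht] := Hmr a; move: (Hnone p); rewrite HpD Ht eqxx.
pose g := fun t : 'I_n -> A => f [ffun i => sel (t i)].
have Hdom : forall t : 'I_n -> A, in_dom D [ffun i => sel (t i)].
  by move=> t i; rewrite ffunE; case: (Hsel (t i)).
have HgP : forall P, in_dom D P -> f P = g (fun i => tp N0 (P i)).
  move=> P HP; apply: Htops HP (Hdom _) _ => i.
  by rewrite ffunE; case: (Hsel (tp N0 (P i))) => _ ->; rewrite top_tp.
have Hgu : forall a, g (fun _ => a) = a.
  move=> a; apply: Hun (Hdom _) _ => i; rewrite ffunE; by case: (Hsel a).
have HEG : EG (Eg N0 D) g.
  move=> t i u v /andP [Huv /existsP [p /existsP [q /and5P [HpD HqD Hpq /eqP Hpu /eqP Hqv]]]].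
  pose P := [ffun j => sel (t j)].
  have HdU : forall r, r \in D -> in_dom D (upd P i r).
    move=> r Hr j; rewrite ffunE; case: (j == i) => //; exact: Hdom.
  have e : forall r w, r \in D -> top r = Some w -> g (updf t i w) = f (upd P i r).
    move=> r w Hr Hw; rewrite /g; apply: Htops (Hdom _) (HdU _ Hr) _ => j.
    rewrite !ffunE /updf; case: (j == i) => //; by rewrite (Hsel w).2 Hw.
  rewrite /= (e p u HpD) ?top_tp ?Hpu // (e q v HqD) ?top_tp ?Hqv //.
  have Hpi : forall r, (upd P i r) i = r by move=> r; rewrite ffunE eqxx.
  have Huu : forall r r', upd (upd P i r) i r' = upd P i r'.
    by move=> r r'; apply/ffunP => j; rewrite !ffunE; case: (j == i).
  have L1 := Hlsp (upd P i p) i q (HdU _ HpD) HqD; rewrite Hpi Huu in L1.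
  have L2 := Hlsp (upd P i q) i p (HdU _ HqD) HpD; rewrite Hpi Huu in L2.
  have Hne : tp N0 p != tp N0 q by rewrite Hpu Hqv.
  have K := key (Hlin p HpD) (Hlin q HqD) Hpq Hne (L1 Hpq) (L2 (adj_sym Hpq)).
  by rewrite -Hpu -Hqv.
have Hcard : #|'I_n| = n.-1.+1 by rewrite card_ord; move: Hn; case: (n).
have [i Hi] := nvoter (@Eg_sym A N0 D) (@Eg_irr A N0 D) (Econn_of N0 Hmr H2n.1)
  (Edeg_of N0 Hmr H2n) a0 Hcard Hgu HEG.
by exists i => P HP; rewrite (HgP P HP) Hi top_tp.
Qed.
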